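(* Let $X$ be a compact metric space and $f\colon X\to X$ a transitive $n$-expansive homeomorphism with the shadowing property. Then $f$ has the two-sided limit shadowing property with a gap.
   Context: For $x\in X$, $c>0$: $W^s_c(x)=\{y: d(f^k(y),f^k(x))\leq c\ \forall k\geq0\}$, $W^u_c(x)=\{y: d(f^k(y),f^k(x))\leq c\ \forall k\leq0\}$. $f$ is $n$-expansive if there is $c>0$ such that $W^s_c(x)\cap W^u_c(x)$ has at most $n$ points for every $x$. $f$ is transitive if for every nonempty open $U,V$ there is $k\in\mathbb{N}$ with $f^k(U)\cap V\neq\emptyset$. $f$ has the shadowing property if for every $\varepsilon>0$ there is $\delta>0$ such that for every $(x_k)_{k\in\mathbb{Z}}$ with $d(f(x_k),x_{k+1})<\delta$ for all $k$ there is $y$ with $d(f^k(y),x_k)<\varepsilon$ for all $k$. A two-sided limit pseudo orbit is $(x_k)_{k\in\mathbb{Z}}$ with $d(f(x_k),x_{k+1})\to0$ as $|k|\to\infty$. It is two-sided limit shadowed with gap $K\in\mathbb{Z}$ if there is $y\in X$ with $d(f^k(y),x_k)\to0$ as $k\to-\infty$ and $d(f^{K+k}(y),x_k)\to0$ as $k\to\infty$. $f$ has the two-sided limit shadowing property with a gap if there exists $N\in\mathbb{N}$ such that every two-sided limit pseudo orbit is two-sided limit shadowed with some gap $K$ satisfying $|K|\leq N$. *)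

(* Defs.v *)
From Stdlib Require Import Reals Lra List.
Open Scope R_scope.

Record metric_space := MetricSpace {
  mcarrier :> Type;
  dist : mcarrier -> mcarrier -> R;
  dist_nonneg : forall x y, 0 <= dist x y;
  dist_eq0 : forall x y, dist x y = 0 <-> x = y;
  dist_sym : forall x y, dist x y = dist y x;
  dist_tri : forall x y z, dist x z <= dist x y + dist y z
}.

Section Metric.
Variable X : metric_space.

Definition ball (x : X) (r : R) : X -> Prop := fun y => dist X x y < r.

Definition is_open (U : X -> Prop) : Prop :=
  forall x, U x -> exists r, 0 < r /\ forall y, ball x r y -> U y.

Definition compact_space : Prop :=
  forall (I : Type) (U : I -> X -> Prop),
    (forall i, is_open (U i)) ->
    (forall x, exists i, U i x) ->
    exists l : list I, forall x, exists i, In i l /\ U i x.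

Definition continuous_map (f : X -> X) : Prop :=
  forall x eps, 0 < eps -> exists del, 0 < del /\
    forall y, dist X x y < del -> dist X (f x) (f y) < eps.

Definition homeomorphism (f : X -> X) : Prop :=
  continuous_map f /\
  exists g : X -> X, continuous_map g /\
    (forall x, g (f x) = x) /\ (forall x, f (g x) = x).

Definition ziter (f g : X -> X) (k : Z) (x : X) : X :=
  match k with
  | Z0 => x
  | Zpos p => Nat.iter (Pos.to_nat p) f x
  | Zneg p => Nat.iter (Pos.to_nat p) g x
  end.

Definition Ws (f g : X -> X) (c : R) (x : X) : X -> Prop :=
  fun y => forall k : Z, (0 <= k)%Z -> dist X (ziter f g k y) (ziter f g k x) <= c.
Definition Wu (f g : X -> X) (c : R) (x : X) : X -> Prop :=
  fun y => forall k : Z, (k <= 0)%Z -> dist X (ziter f g k y) (ziter f g k x) <= c.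

Definition at_most (n : nat) (A : X -> Prop) : Prop :=
  exists l : list X, (length l <= n)%nat /\ forall y, A y -> In y l.

Definition n_expansive (n : nat) (f g : X -> X) : Prop :=
  exists c, 0 < c /\ forall x, at_most n (fun y => Ws f g c x y /\ Wu f g c x y).

Definition transitive (f : X -> X) : Prop :=
  forall U V : X -> Prop, is_open U -> is_open V ->
    (exists u, U u) -> (exists v, V v) ->
    exists k : nat, exists u, U u /\ V (Nat.iter k f u).

Definition shadowing (f g : X -> X) : Prop :=
  forall eps, 0 < eps -> exists del, 0 < del /\
    forall xs : Z -> X, (forall k, dist X (f (xs k)) (xs (k + 1)%Z) < del) ->
      exists y, forall k, dist X (ziter f g k y) (xs k) < eps.

Definition tends0_pos (u : Z -> R) : Prop :=
  forall eps, 0 < eps -> exists K : Z, forall k, (K <= k)%Z -> Rabs (u k) < eps.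
Definition tends0_neg (u : Z -> R) : Prop :=
  forall eps, 0 < eps -> exists K : Z, forall k, (k <= K)%Z -> Rabs (u k) < eps.

Definition two_sided_limit_pseudo_orbit (f : X -> X) (xs : Z -> X) : Prop :=
  tends0_pos (fun k => dist X (f (xs k)) (xs (k + 1)%Z)) /\
  tends0_neg (fun k => dist X (f (xs k)) (xs (k + 1)%Z)).

Definition two_sided_limit_shadowed_gap (f g : X -> X) (xs : Z -> X) (K : Z) : Prop :=
  exists y,
    tends0_neg (fun k => dist X (ziter f g k y) (xs k)) /\
    tends0_pos (fun k => dist X (ziter f g (K + k) y) (xs k)).

Definition two_sided_limit_shadowing_gap (f g : X -> X) : Prop :=
  exists N : nat, forall xs : Z -> X, two_sided_limit_pseudo_orbit f xs ->
    exists K : Z, (Z.abs K <= Z.of_nat N)%Z /\ two_sided_limit_shadowed_gap f g xs K.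

End Metric.

(* Main.v *)
Require Import Defs.
From Stdlib Require Import Reals Lra Lia List ZArith Classical ClassicalEpsilon.
Open Scope R_scope.

Section Main.
Variable X : metric_space.
Variables f g : X -> X.
Hypothesis gf : forall x, g (f x) = x.
Hypothesis fg : forall x, f (g x) = x.

Notation d := (Defs.dist X).
Notation zi := (ziter X f g).

Lemma d_refl : forall x, d x x = 0.
Proof. intro x. apply Defs.dist_eq0. reflexivity. Qed.

Lemma d_tri : forall x y z, d x z <= d x y + d y z.
Proof. apply Defs.dist_tri. Qed.

Lemma d_sym : forall x y, d x y = d y x.
Proof. apply Defs.dist_sym. Qed.

Lemma d_pos : forall x y, 0 <= d x y.
Proof. apply Defs.dist_nonneg. Qed.

Lemma zi_nat : forall n x, zi (Z.of_nat n) x = Nat.iter n f x.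
Proof.
  intros [|n] x; simpl; auto.
  rewrite SuccNat2Pos.id_succ. reflexivity.
Qed.

Lemma zi_negnat : forall n x, zi (- Z.of_nat n) x = Nat.iter n g x.
Proof.
  intros [|n] x; simpl; auto.
  rewrite SuccNat2Pos.id_succ. reflexivity.
Qed.

Lemma Z_cases : forall k : Z, exists n, k = Z.of_nat n \/ k = (- Z.of_nat n)%Z.
Proof.
  intro k. exists (Z.to_nat (Z.abs k)). lia.
Qed.

Lemma zi_S : forall k x, zi (k + 1) x = f (zi k x).
Proof.
  intros k x. destruct (Z_cases k) as [n [-> | ->]].
  - replace (Z.of_nat n + 1)%Z with (Z.of_nat (S n)) by lia.
    rewrite !zi_nat. reflexivity.
  - destruct n as [|n].
    + simpl. reflexivity.
    + replace (- Z.of_nat (S n) + 1)%Z with (- Z.of_nat n)%Z by lia.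
      rewrite !zi_negnat. simpl. rewrite fg. reflexivity.
Qed.

Lemma zi_P : forall k x, zi (k - 1) x = g (zi k x).
Proof.
  intros k x. replace k with ((k - 1) + 1)%Z at 2 by lia.
  rewrite zi_S, gf. reflexivity.
Qed.

Lemma zi_0 : forall x, zi 0 x = x.
Proof. reflexivity. Qed.

Lemma zi_comm_f : forall a y, zi a (f y) = f (zi a y).
Proof.
  intro a. induction a using Z.peano_ind; intro y.
  - reflexivity.
  - rewrite <- Z.add_1_r. rewrite !zi_S, IHa. reflexivity.
  - rewrite <- Z.sub_1_r. rewrite !zi_P, IHa, gf, fg. reflexivity.
Qed.

Lemma zi_add : forall a b x, zi (a + b) x = zi a (zi b x).
Proof.
  intros a b. induction b using Z.peano_ind; intro x.
  - rewrite Z.add_0_r. reflexivity.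
  - rewrite <- Z.add_1_r.
    replace (a + (b + 1))%Z with ((a + b) + 1)%Z by lia.
    rewrite !zi_S, IHb, zi_comm_f. reflexivity.
  - rewrite <- Z.sub_1_r.
    replace (a + (b - 1))%Z with ((a + b) - 1)%Z by lia.
    rewrite !zi_P, IHb.
    (* zi a (g y) = g (zi a y) *)
    set (y := zi b x).
    rewrite <- (fg y) at 1. rewrite zi_comm_f, gf. reflexivity.
Qed.

Definition cont (h : X -> X) := forall x eps, 0 < eps -> exists del, 0 < del /\
    forall y, d x y < del -> d (h x) (h y) < eps.

Lemma cont_comp : forall h1 h2, cont h1 -> cont h2 -> cont (fun x => h1 (h2 x)).
Proof.
  intros h1 h2 H1 H2 x eps He.
  destruct (H1 (h2 x) eps He) as [d1 [Hd1 P1]].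
  destruct (H2 x d1 Hd1) as [d2 [Hd2 P2]].
  exists d2. split; auto.
Qed.

Lemma cont_iter : forall h n, cont h -> cont (Nat.iter n h).
Proof.
  intros h n Hh. induction n.
  - intros x eps He. exists eps. split; auto.
  - simpl. apply (cont_comp h (Nat.iter n h)); auto.
Qed.

Hypothesis fcont : cont f.
Hypothesis gcont : cont g.

Lemma zi_cont : forall k, cont (zi k).
Proof.
  intro k. destruct (Z_cases k) as [n [-> | ->]].
  - intros x e He. destruct (cont_iter f n fcont x e He) as [dl [H1 H2]].
    exists dl. split; auto. intros y Hy. rewrite !zi_nat. auto.
  - intros x e He. destruct (cont_iter g n gcont x e He) as [dl [H1 H2]].
    exists dl. split; auto. intros y Hy. rewrite !zi_negnat. auto.
Qed.


Variable n : nat.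
Variable c : R.
Hypothesis cpos : 0 < c.
Hypothesis Hexp : forall x, at_most X n (fun y => Ws X f g c x y /\ Wu X f g c x y).
Hypothesis Hsh : shadowing X f g.

Definition inW (r y : X) := forall k, d (zi k y) (zi k r) <= c.

Lemma NoDup_map_seq : forall (w : nat -> X) len a,
  (forall m l, a <= m < a + len -> a <= l < a + len -> m <> l -> w m <> w l)%nat ->
  NoDup (map w (seq a len)).
Proof.
  intros w len. induction len; intros a H; simpl.
  - constructor.
  - constructor.
    + intro Hin. apply in_map_iff in Hin. destruct Hin as [m [Hm Hin]].
      apply in_seq in Hin. apply (H m a); auto; lia.
    + apply IHlen. intros m l Hm Hl Hml. apply H; lia.
Qed.

Lemma too_many : forall r (w : nat -> X),
  (forall m, (m <= n)%nat -> inW r (w m)) ->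
  (forall m l, (m <= n)%nat -> (l <= n)%nat -> m <> l -> w m <> w l) -> False.
Proof.
  intros r w Hin Hd.
  destruct (Hexp r) as [l0 [Hlen Hl0]].
  assert (ND : NoDup (map w (seq 0 (S n)))).
  { apply NoDup_map_seq. intros m l Hm Hl Hml. apply Hd; lia. }
  assert (INC : incl (map w (seq 0 (S n))) l0).
  { intros y Hy. apply in_map_iff in Hy. destruct Hy as [m [<- Hm]].
    apply in_seq in Hm. apply Hl0. split; intros k _; apply Hin; lia. }
  pose proof (NoDup_incl_length ND INC) as HL.
  rewrite length_map, length_seq in HL. lia.
Qed.

Definition pseudo (del : R) (xs : Z -> X) := forall k, d (f (xs k)) (xs (k + 1)%Z) < del.

Lemma choice_nat : forall (P : nat -> X -> Prop), (forall m, exists y, P m y) ->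
  exists w : nat -> X, forall m, P m (w m).
Proof.
  intros P H. exists (fun m => proj1_sig (constructive_indefinite_description _ (H m))).
  intro m. exact (proj2_sig (constructive_indefinite_description _ (H m))).
Qed.

Lemma many_shadows : forall (r : X) (H : nat -> Z -> X) (eta del E : R),
  0 < eta ->
  (forall xs, pseudo del xs -> exists y, forall k, d (zi k y) (xs k) < eta) ->
  (forall m, (m <= n)%nat -> pseudo del (H m)) ->
  (forall m k, (m <= n)%nat -> d (H m k) (zi k r) <= E) ->
  eta + E <= c ->
  (forall m l, (m <= n)%nat -> (l <= n)%nat -> m <> l -> exists k, 2 * eta <= d (H m k) (H l k)) ->
  False.
Proof.
  intros r H eta del E Heta Hs Hps HE HEc Hsep.
  destruct (choice_nat (fun m y => (m <= n)%nat -> forall k, d (zi k y) (H m k) < eta)) as [w Hw].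
  { intro m. destruct (le_lt_dec m n) as [Hm|Hm].
    - destruct (Hs (H m) (Hps m Hm)) as [y Hy]. exists y. auto.
    - exists r. intro; lia. }
  apply (too_many r w).
  - intros m Hm k. pose proof (Hw m Hm k). pose proof (HE m k Hm).
    pose proof (d_tri (zi k (w m)) (H m k) (zi k r)). lra.
  - intros m l Hm Hl Hml Heq. destruct (Hsep m l Hm Hl Hml) as [k Hk].
    pose proof (Hw m Hm k) as A1. pose proof (Hw l Hl k) as A2. rewrite Heq in A1.
    pose proof (d_tri (H m k) (zi k (w l)) (H l k)) as A3.
    rewrite (d_sym (H m k) (zi k (w l))) in A3. lra.
Qed.


Definition Hyb (p q : X) (t : Z) (k : Z) : X := if Z.ltb k t then zi k p else zi k q.

Lemma hyb_pseudo : forall p q t del, 0 < del -> d (zi t p) (zi t q) < del ->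
  pseudo del (Hyb p q t).
Proof.
  intros p q t del Hd Ht k. unfold Hyb.
  destruct (Z.ltb_spec k t); destruct (Z.ltb_spec (k + 1) t).
  - rewrite <- zi_S, d_refl. lra.
  - replace t with (k + 1)%Z in Ht by lia. rewrite <- zi_S. exact Ht.
  - lia.
  - rewrite <- zi_S, d_refl. lra.
Qed.

Definition asym (s : Z) (a b : X) := forall gam, 0 < gam ->
  exists B, forall k, (B <= s * k)%Z -> d (zi k a) (zi k b) < gam.
Definition closeS (s : Z) (a b : X) (e : R) :=
  exists B, forall k, (B <= s * k)%Z -> d (zi k a) (zi k b) <= e.
Definition sepS (s : Z) (a b : X) := exists lam, 0 < lam /\
  exists B, forall k, (B <= s * k)%Z -> lam <= d (zi k a) (zi k b).

Lemma choiceZ : forall (P : Z -> Z -> Prop), (forall B, exists k, P B k) ->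
  exists h : Z -> Z, forall B, P B (h B).
Proof.
  intros P H. exists (fun B => proj1_sig (constructive_indefinite_description _ (H B))).
  intro B. exact (proj2_sig (constructive_indefinite_description _ (H B))).
Qed.

Lemma caseA_fwd : forall u v, closeS 1 u v (c / 2) -> ~ asym 1 u v -> sepS 1 u v.
Proof.
  intros u v [B0 HB0] Hna.
  apply NNPP. intro Hns.
  assert (Hbig : exists gam, 0 < gam /\ forall B, exists k, (B <= k)%Z /\ gam <= d (zi k u) (zi k v)).
  { apply NNPP. intro Hc. apply Hna. intros gam Hg.
    apply NNPP. intro Hc2. apply Hc. exists gam. split; auto. intro B.
    apply NNPP. intro Hc3. apply Hc2. exists B. intros k Hk.
    apply Rnot_le_lt. intro Hle. apply Hc3. exists k. split; [lia|auto]. }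
  destruct Hbig as [gam [Hg Hbig]].
  assert (Hsmall : forall lam, 0 < lam -> forall B, exists k, (B <= k)%Z /\ d (zi k u) (zi k v) < lam).
  { intros lam Hl B. apply NNPP. intro Hc. apply Hns. exists lam. split; auto. exists B.
    intros k Hk. apply Rnot_lt_le. intro Hlt. apply Hc. exists k. split; [lia|auto]. }
  destruct (Hsh (gam / 4)) as [del [Hdel Hshd]]; [lra|].
  destruct (choiceZ (fun B k => (B <= k)%Z /\ d (zi k u) (zi k v) < del) (Hsmall del Hdel)) as [sm Hsm].
  destruct (choiceZ (fun B k => (B <= k)%Z /\ gam <= d (zi k u) (zi k v)) Hbig) as [bg Hbg].
  assert (Hgc : gam <= c / 2).
  { destruct (Hbg B0) as [H1 H2]. specialize (HB0 (bg B0)). assert (HH : d (zi (bg B0) u) (zi (bg B0) v) <= c / 2) by (apply HB0; lia); lra. }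
  pose (tt := fix tt (m : nat) : Z := match m with O => sm B0 | S m' => sm (bg (tt m') + 1)%Z end).
  assert (Ht0 : forall m, d (zi (tt m) u) (zi (tt m) v) < del).
  { intros [|m]; simpl; apply Hsm. }
  assert (Ht1 : forall m, (tt m <= bg (tt m) /\ bg (tt m) < tt (S m))%Z).
  { intro m. split; [apply Hbg|]. simpl. pose proof (proj1 (Hsm (bg (tt m) + 1)%Z)). lia. }
  assert (Hmono : forall m l, (m <= l)%nat -> (tt m <= tt l)%Z).
  { intros m l Hml. induction Hml; [lia|]. pose proof (Ht1 m0). lia. }
  assert (HtB : forall m, (B0 <= tt m)%Z).
  { intro m. pose proof (Hmono 0%nat m ltac:(lia)). simpl in H. pose proof (proj1 (Hsm B0)). lia. }
  apply (many_shadows u (fun m => Hyb u v (tt m)) (gam / 4) del (c / 2)); auto; try lra.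
  - intros m _. apply hyb_pseudo; auto.
  - intros m k _. unfold Hyb. destruct (Z.ltb_spec k (tt m)).
    + rewrite d_refl. lra.
    + rewrite d_sym. apply HB0. pose proof (HtB m). lia.
  - assert (Hsep : forall m l, (m < l)%nat -> 2 * (gam / 4) <=
       d (Hyb u v (tt m) (bg (tt m))) (Hyb u v (tt l) (bg (tt m)))).
    { intros m l Hml. unfold Hyb. pose proof (Ht1 m) as [A1 A2].
      pose proof (Hmono (S m) l Hml).
      destruct (Z.ltb_spec (bg (tt m)) (tt m)); [lia|].
      destruct (Z.ltb_spec (bg (tt m)) (tt l)); [|lia].
      rewrite d_sym. pose proof (proj2 (Hbg (tt m))). lra. }
    intros m l _ _ Hml. assert (Hc : (m < l \/ l < m)%nat) by lia. destruct Hc as [Hl|Hl].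
    + exists (bg (tt m)). auto.
    + exists (bg (tt l)). rewrite d_sym. auto.
Qed.

Lemma caseA_bwd : forall u v, closeS (-1) u v (c / 2) -> ~ asym (-1) u v -> sepS (-1) u v.
Proof.
  intros u v [B0 HB0] Hna.
  apply NNPP. intro Hns.
  assert (Hbig : exists gam, 0 < gam /\ forall B, exists k, (B <= -1 * k)%Z /\ gam <= d (zi k u) (zi k v)).
  { apply NNPP. intro Hc. apply Hna. intros gam Hg.
    apply NNPP. intro Hc2. apply Hc. exists gam. split; auto. intro B.
    apply NNPP. intro Hc3. apply Hc2. exists B. intros k Hk.
    apply Rnot_le_lt. intro Hle. apply Hc3. exists k. split; [lia|auto]. }
  destruct Hbig as [gam [Hg Hbig]].
  assert (Hsmall : forall lam, 0 < lam -> forall B, exists k, (B <= -1 * k)%Z /\ d (zi k u) (zi k v) < lam).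
  { intros lam Hl B. apply NNPP. intro Hc. apply Hns. exists lam. split; auto. exists B.
    intros k Hk. apply Rnot_lt_le. intro Hlt. apply Hc. exists k. split; [lia|auto]. }
  destruct (Hsh (gam / 4)) as [del [Hdel Hshd]]; [lra|].
  destruct (choiceZ (fun B k => (B <= -1 * k)%Z /\ d (zi k u) (zi k v) < del) (Hsmall del Hdel)) as [sm Hsm].
  destruct (choiceZ (fun B k => (B <= -1 * k)%Z /\ gam <= d (zi k u) (zi k v)) Hbig) as [bg Hbg].
  assert (Hgc : gam <= c / 2).
  { destruct (Hbg B0) as [H1 H2].
    assert (HH : d (zi (bg B0) u) (zi (bg B0) v) <= c / 2) by (apply HB0; lia); lra. }
  pose (tt := fix tt (m : nat) : Z := match m with O => sm B0 | S m' => sm (- bg (- tt m' + 1))%Z end).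
  assert (Ht0 : forall m, d (zi (tt m) u) (zi (tt m) v) < del).
  { intros [|m]; simpl; apply Hsm. }
  assert (Ht1 : forall m, (bg (- tt m + 1) < tt m /\ tt (S m) <= bg (- tt m + 1))%Z).
  { intro m. split; [pose proof (proj1 (Hbg (- tt m + 1)%Z)); lia|].
    simpl. pose proof (proj1 (Hsm (- bg (- tt m + 1))%Z)). lia. }
  assert (Hmono : forall m l, (m <= l)%nat -> (tt l <= tt m)%Z).
  { intros m l Hml. induction Hml; [lia|]. pose proof (Ht1 m0). lia. }
  assert (HtB : forall m, (B0 <= - tt m)%Z).
  { intro m. pose proof (Hmono 0%nat m ltac:(lia)). simpl in H. pose proof (proj1 (Hsm B0)). lia. }
  apply (many_shadows u (fun m => Hyb v u (tt m)) (gam / 4) del (c / 2)); auto; try lra.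
  - intros m _. apply hyb_pseudo; auto. rewrite d_sym. auto.
  - intros m k _. unfold Hyb. destruct (Z.ltb_spec k (tt m)).
    + rewrite d_sym. apply HB0. pose proof (HtB m). lia.
    + rewrite d_refl. lra.
  - assert (Hsep : forall m l, (m < l)%nat -> 2 * (gam / 4) <=
       d (Hyb v u (tt m) (bg (- tt m + 1)%Z)) (Hyb v u (tt l) (bg (- tt m + 1)%Z))).
    { intros m l Hml. unfold Hyb. pose proof (Ht1 m) as [A1 A2].
      pose proof (Hmono (S m) l Hml).
      destruct (Z.ltb_spec (bg (- tt m + 1)%Z) (tt m)); [|lia].
      destruct (Z.ltb_spec (bg (- tt m + 1)%Z) (tt l)); [lia|].
      rewrite d_sym. pose proof (proj2 (Hbg (- tt m + 1)%Z)). lra. }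
    intros m l _ _ Hml. assert (Hc : (m < l \/ l < m)%nat) by lia. destruct Hc as [Hl|Hl].
    + exists (bg (- tt m + 1)%Z). auto.
    + exists (bg (- tt l + 1)%Z). rewrite d_sym. auto.
Qed.

Lemma caseA : forall s u v, (s = 1 \/ s = -1)%Z -> closeS s u v (c / 2) -> ~ asym s u v -> sepS s u v.
Proof.
  intros s u v [-> | ->]; [apply caseA_fwd | apply caseA_bwd].
Qed.

Hypothesis Hcpt : compact_space X.

Lemma ball_open : forall x r, is_open X (Defs.ball X x r).
Proof.
  intros x r y Hy. unfold Defs.ball in *. exists (r - d x y). split; [lra|].
  intros z Hz. pose proof (d_tri x y z). lra.
Qed.

Lemma fold_max_ge : forall (l : list nat) x, In x l -> (x <= fold_right Nat.max 0%nat l)%nat.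
Proof.
  induction l; simpl; intros x Hx; [contradiction|].
  destruct Hx as [<-|Hx]; [lia|]. specialize (IHl x Hx). lia.
Qed.

Lemma cluster : forall u : nat -> X, exists a, forall r, 0 < r -> forall B, exists j, (B <= j)%nat /\ d a (u j) < r.
Proof.
  intro u. apply NNPP. intro Hn.
  assert (Hall : forall a, exists r, 0 < r /\ exists B, forall j, (B <= j)%nat -> r <= d a (u j)).
  { intro a. apply NNPP. intro Ha. apply Hn. exists a. intros r Hr B.
    apply NNPP. intro Hb. apply Ha. exists r. split; auto. exists B. intros j Hj.
    apply Rnot_lt_le. intro Hlt. apply Hb. exists j. auto. }
  pose (I := {p : (X * R) * nat | 0 < snd (fst p) /\ forall j, (snd p <= j)%nat -> snd (fst p) <= d (fst (fst p)) (u j)}).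
  pose (U := fun (i : I) => Defs.ball X (fst (fst (proj1_sig i))) (snd (fst (proj1_sig i)))).
  destruct (Hcpt I U) as [l Hl].
  - intro i. apply ball_open.
  - intro x. destruct (Hall x) as [r [Hr [B HB]]].
    exists (exist _ ((x, r), B) (conj Hr HB)). unfold U, Defs.ball. simpl. rewrite d_refl. exact Hr.
  - pose (Bm := fold_right Nat.max 0%nat (map (fun i : I => snd (proj1_sig i)) l)).
    destruct (Hl (u Bm)) as [i [Hi HU]].
    destruct i as [[[x r] B] [Hr HB]]. unfold U, Defs.ball in HU. simpl in HU.
    assert (HBm : (B <= Bm)%nat).
    { apply fold_max_ge. apply in_map_iff. eexists. split; [|exact Hi]. reflexivity. }
    pose proof (HB Bm HBm) as HB2. simpl in HB2. lra.
Qed.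

Definition conv (v : nat -> X) (a : X) := forall r, 0 < r -> exists N, forall t, (N <= t)%nat -> d (v t) a < r.

Lemma archi_inv : forall r, 0 < r -> exists N, / (INR N + 1) < r.
Proof.
  intros r Hr. destruct (archimed (/ r)) as [H1 H2].
  assert (Hp : 0 < / r) by (apply Rinv_0_lt_compat; auto).
  assert (Hu : (0 <= up (/ r))%Z).
  { apply le_IZR. lra. }
  exists (Z.to_nat (up (/ r))).
  rewrite INR_IZR_INZ, Z2Nat.id by auto.
  rewrite <- (Rinv_inv r) at 2.
  apply Rinv_lt_contravar.
  - apply Rmult_lt_0_compat; lra.
  - lra.
Qed.

Lemma incr_ge : forall psi : nat -> nat, (forall t, (psi t < psi (S t))%nat) -> forall t, (t <= psi t)%nat.
Proof.
  intros psi H t. induction t; [lia|]. specialize (H t). lia.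
Qed.

Lemma conv_sub : forall v a psi, conv v a -> (forall t, (psi t < psi (S t))%nat) ->
  conv (fun t => v (psi t)) a.
Proof.
  intros v a psi Hc Hp r Hr. destruct (Hc r Hr) as [N HN]. exists N. intros t Ht.
  apply HN. pose proof (incr_ge psi Hp t). lia.
Qed.

Lemma extract : forall u : nat -> X, exists phi : nat -> nat, (forall t, (phi t < phi (S t))%nat) /\
  exists a, conv (fun t => u (phi t)) a.
Proof.
  intro u. destruct (cluster u) as [a Ha].
  assert (Hs : forall B k : nat, exists j, (B <= j)%nat /\ d a (u j) < / (INR k + 1)).
  { intros B k. apply Ha. apply Rinv_0_lt_compat. pose proof (pos_INR k). lra. }
  pose (nx := fun B k => proj1_sig (constructive_indefinite_description _ (Hs B k))).
  assert (Hnx : forall B k, (B <= nx B k)%nat /\ d a (u (nx B k)) < / (INR k + 1)).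
  { intros B k. exact (proj2_sig (constructive_indefinite_description _ (Hs B k))). }
  pose (phi := fix phi (t : nat) : nat := match t with O => nx 0%nat 0%nat | S t' => nx (S (phi t')) (S t') end).
  exists phi. split.
  - intro t. simpl. pose proof (proj1 (Hnx (S (phi t)) (S t))). lia.
  - exists a. intros r Hr. destruct (archi_inv r Hr) as [N HN]. exists N. intros t Ht.
    assert (Hd : d a (u (phi t)) < / (INR t + 1)).
    { destruct t; simpl; apply Hnx. }
    assert (/ (INR t + 1) <= / (INR N + 1)).
    { apply Rinv_le_contravar. pose proof (pos_INR N). lra. apply le_INR in Ht. lra. }
    rewrite d_sym. lra.
Qed.

Lemma extract_tuple : forall (u : nat -> nat -> X) (m : nat), exists phi : nat -> nat,
  (forall t, (phi t < phi (S t))%nat) /\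
  exists a : nat -> X, forall i, (i < m)%nat -> conv (fun t => u i (phi t)) (a i).
Proof.
  intros u m. induction m.
  - exists (fun t => t). split; [intro; lia|]. exists (fun _ => u 0%nat 0%nat). intros; lia.
  - destruct IHm as [phi [Hphi [a Ha]]].
    destruct (extract (fun t => u m (phi t))) as [psi [Hpsi [b Hb]]].
    exists (fun t => phi (psi t)). split.
    + intro t. specialize (Hpsi t).
      assert (Hmono : forall x y, (x < y)%nat -> (phi x < phi y)%nat).
      { intros x y Hxy. induction Hxy; [apply Hphi|]. specialize (Hphi m0). lia. }
      apply Hmono. auto.
    + exists (fun i => if Nat.eqb i m then b else a i). intros i Hi.
      destruct (Nat.eqb_spec i m).
      * subst. exact Hb.
      * apply (conv_sub (fun t => u i (phi t))); auto. apply Ha. lia.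
Qed.

Lemma lim_le : forall p q P Q e, conv p P -> conv q Q ->
  (exists N, forall t, (N <= t)%nat -> d (p t) (q t) <= e) -> d P Q <= e.
Proof.
  intros p q P Q e Hp Hq [N HN]. apply Rnot_lt_le. intro Hlt.
  set (eta := (d P Q - e) / 2).
  destruct (Hp eta ltac:(unfold eta; lra)) as [N1 H1].
  destruct (Hq eta ltac:(unfold eta; lra)) as [N2 H2].
  set (t := (N + N1 + N2)%nat).
  specialize (HN t ltac:(unfold t; lia)). specialize (H1 t ltac:(unfold t; lia)).
  specialize (H2 t ltac:(unfold t; lia)).
  pose proof (d_tri P (p t) Q). pose proof (d_tri (p t) (q t) Q).
  rewrite (d_sym P (p t)) in H. unfold eta in *. lra.
Qed.

Lemma lim_ge : forall p q P Q lam, conv p P -> conv q Q ->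
  (exists N, forall t, (N <= t)%nat -> lam <= d (p t) (q t)) -> lam <= d P Q.
Proof.
  intros p q P Q lam Hp Hq [N HN]. apply Rnot_lt_le. intro Hlt.
  set (eta := (lam - d P Q) / 2).
  destruct (Hp eta ltac:(unfold eta; lra)) as [N1 H1].
  destruct (Hq eta ltac:(unfold eta; lra)) as [N2 H2].
  set (t := (N + N1 + N2)%nat).
  specialize (HN t ltac:(unfold t; lia)). specialize (H1 t ltac:(unfold t; lia)).
  specialize (H2 t ltac:(unfold t; lia)).
  pose proof (d_tri (p t) P (q t)). pose proof (d_tri P Q (q t)).
  rewrite (d_sym Q (q t)) in H0. unfold eta in *. lra.
Qed.

Lemma conv_zi : forall k p P, conv p P -> conv (fun t => zi k (p t)) (zi k P).
Proof.
  intros k p P Hc r Hr. destruct (zi_cont k P r Hr) as [del [Hdel Hd]].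
  destruct (Hc del Hdel) as [N HN]. exists N. intros t Ht. rewrite d_sym. apply Hd.
  rewrite d_sym. auto.
Qed.

Lemma omega_contra : forall s (z : nat -> X), (s = 1 \/ s = -1)%Z ->
  (forall i j, (i <= n)%nat -> (j <= n)%nat -> closeS s (z i) (z j) (c / 2)) ->
  (forall i j, (i <= n)%nat -> (j <= n)%nat -> i <> j -> sepS s (z i) (z j)) -> False.
Proof.
  intros s z Hs Hcl Hsep.
  destruct (extract_tuple (fun i t => zi (s * Z.of_nat t) (z i)) (S n)) as [phi [Hphi [a Ha]]].
  assert (Hss : forall k p, (s * (k + s * p) = s * k + p)%Z).
  { intros k p. destruct Hs; subst; lia. }
  apply (too_many (a 0%nat) a).
  - intros m Hm k.
    destruct (Hcl m 0%nat Hm ltac:(lia)) as [B HB].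
    apply (lim_le (fun t => zi k (zi (s * Z.of_nat (phi t)) (z m)))
                  (fun t => zi k (zi (s * Z.of_nat (phi t)) (z 0%nat)))).
    + apply conv_zi. apply Ha. lia.
    + apply conv_zi. apply Ha. lia.
    + exists (Z.to_nat (B - s * k)). intros t Ht. rewrite <- !zi_add.
      assert (HB' : d (zi (k + s * Z.of_nat (phi t)) (z m)) (zi (k + s * Z.of_nat (phi t)) (z 0%nat)) <= c / 2).
      { apply HB. rewrite Hss. pose proof (incr_ge phi Hphi t). lia. }
      lra.
  - intros i j Hi Hj Hij Heq.
    destruct (Hsep i j Hi Hj Hij) as [lam [Hlam [B HB]]].
    assert (Hge : lam <= d (a i) (a j)).
    { apply (lim_ge (fun t => zi (s * Z.of_nat (phi t)) (z i))
                    (fun t => zi (s * Z.of_nat (phi t)) (z j))).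
      + apply Ha. lia.
      + apply Ha. lia.
      + exists (Z.to_nat B). intros t Ht. apply HB.
        replace (s * (s * Z.of_nat (phi t)))%Z with (Z.of_nat (phi t)) by (destruct Hs; subst; lia).
        pose proof (incr_ge phi Hphi t). lia. }
    rewrite Heq, d_refl in Hge. lra.
Qed.

Lemma asym_sym : forall s a b, asym s a b -> asym s b a.
Proof.
  intros s a b H gam Hg. destruct (H gam Hg) as [B HB]. exists B. intros k Hk. rewrite d_sym. auto.
Qed.

Lemma asym_trans : forall s a b e, asym s a b -> asym s b e -> asym s a e.
Proof.
  intros s a b e H1 H2 gam Hg. destruct (H1 (gam / 2) ltac:(lra)) as [B1 HB1].
  destruct (H2 (gam / 2) ltac:(lra)) as [B2 HB2]. exists (Z.max B1 B2). intros k Hk.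
  specialize (HB1 k ltac:(lia)). specialize (HB2 k ltac:(lia)).
  pose proof (d_tri (zi k a) (zi k b) (zi k e)). lra.
Qed.

Lemma choice_nn : forall (P : nat -> nat -> Prop), (forall m, exists j, P m j) ->
  exists h : nat -> nat, forall m, P m (h m).
Proof.
  intros P H. exists (fun m => proj1_sig (constructive_indefinite_description _ (H m))).
  intro m. exact (proj2_sig (constructive_indefinite_description _ (H m))).
Qed.

Lemma classes : forall s (y : nat -> X) (J : nat -> Prop), (s = 1 \/ s = -1)%Z ->
  (forall B, exists j, (B <= j)%nat /\ J j) ->
  (forall i j, J i -> J j -> closeS s (y i) (y j) (c / 2)) ->
  exists i, J i /\ forall B, exists j, (B <= j)%nat /\ J j /\ asym s (y i) (y j).
Proof.
  intros s y J Hs HJ Hcl. apply NNPP. intro Hn.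
  assert (Hb : forall i, exists B, J i -> forall j, (B <= j)%nat -> J j -> ~ asym s (y i) (y j)).
  { intro i. apply NNPP. intro H1. apply Hn. exists i. split.
    - apply NNPP. intro HJi. apply H1. exists 0%nat. intro; contradiction.
    - intro B. apply NNPP. intro H2. apply H1. exists B. intros _ j Hj HJj Ha. apply H2. exists j. auto. }
  destruct (choice_nn _ Hb) as [bnd Hbnd].
  destruct (choice_nn _ HJ) as [nj Hnj].
  pose (sq := fix sq (m : nat) : nat * nat := match m with
     | O => (nj 0%nat, bnd (nj 0%nat))
     | S m' => (nj (Nat.max (S (fst (sq m'))) (snd (sq m'))),
                Nat.max (snd (sq m')) (bnd (nj (Nat.max (S (fst (sq m'))) (snd (sq m'))))))
     end).
  pose (idx := fun m => fst (sq m)). pose (acc := fun m => snd (sq m)).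
  assert (Hsq : forall m, idx (S m) = nj (Nat.max (S (idx m)) (acc m)) /\
     acc (S m) = Nat.max (acc m) (bnd (idx (S m)))).
  { intro m. split; reflexivity. }
  assert (HJ0 : J (idx 0%nat)) by apply Hnj.
  assert (Hacc0 : acc 0%nat = bnd (idx 0%nat)) by reflexivity.
  clearbody idx acc.
  assert (HJidx : forall m, J (idx m)).
  { intros [|m]; [apply HJ0|]. rewrite (proj1 (Hsq m)). apply Hnj. }
  assert (Hacc1 : forall m, (bnd (idx m) <= acc m)%nat).
  { intros [|m]; [rewrite Hacc0; lia|]. rewrite (proj2 (Hsq m)). lia. }
  assert (Hacc2 : forall m, (acc m <= acc (S m))%nat).
  { intro m. rewrite (proj2 (Hsq m)). lia. }
  assert (Hidx : forall m, (acc m <= idx (S m) /\ idx m < idx (S m))%nat).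
  { intro m. rewrite (proj1 (Hsq m)). pose proof (proj1 (Hnj (Nat.max (S (idx m)) (acc m)))). lia. }
  assert (Haccm : forall l m, (l <= m)%nat -> (acc l <= acc m)%nat).
  { intros l m Hlm. induction Hlm; [lia|]. specialize (Hacc2 m). lia. }
  assert (Hna : forall l m, (l < m)%nat -> ~ asym s (y (idx l)) (y (idx m))).
  { intros l m Hlm. destruct m as [|m]; [lia|].
    apply (Hbnd (idx l) (HJidx l)); auto.
    pose proof (Hacc1 l). pose proof (Haccm l m ltac:(lia)). pose proof (Hidx m). lia. }
  apply (omega_contra s (fun m => y (idx m)) Hs).
  - intros i j _ _. apply Hcl; auto.
  - intros i j _ _ Hij. apply caseA; auto.
    assert (Hc : (i < j \/ j < i)%nat) by lia. destruct Hc as [Hl|Hl].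
    + apply Hna; auto.
    + intro Ha. apply (Hna j i Hl). apply asym_sym. auto.
Qed.

Definition chain (del : R) (a b : X) (L : nat) := exists C : nat -> X,
  C 0%nat = a /\ C L = b /\ forall i, (i < L)%nat -> d (f (C i)) (C (S i)) < del.

Lemma chain_app : forall del a b e L1 L2, chain del a b L1 -> chain del b e L2 -> chain del a e (L1 + L2).
Proof.
  intros del a b e L1 L2 [C1 [H10 [H1L H1s]]] [C2 [H20 [H2L H2s]]].
  exists (fun i => if Nat.leb i L1 then C1 i else C2 (i - L1)%nat). split; [|split].
  - simpl. auto.
  - destruct (Nat.leb_spec (L1 + L2) L1).
    + assert (L2 = 0%nat) by lia. subst L2. replace (L1 + 0)%nat with L1 by lia. rewrite H1L, <- H2L. auto.
    + replace (L1 + L2 - L1)%nat with L2 by lia. auto.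
  - intros i Hi. destruct (Nat.leb_spec i L1); destruct (Nat.leb_spec (S i) L1).
    + apply H1s. lia.
    + assert (i = L1) by lia. subst i. replace (S L1 - L1)%nat with 1%nat by lia.
      rewrite H1L, <- H20. apply H2s. lia.
    + lia.
    + replace (S i - L1)%nat with (S (i - L1)) by lia. apply H2s. lia.
Qed.

Lemma chain_orbit : forall del z p, 0 < del -> Nat.iter p f z = z -> chain del z z p.
Proof.
  intros del z p Hd Hp. exists (fun i => Nat.iter i f z). split; [reflexivity|split; auto].
  intros i _. simpl. rewrite d_refl. auto.
Qed.

Lemma chain_rep : forall del z p m, 0 < del -> Nat.iter p f z = z -> chain del z z (m * p).
Proof.
  intros del z p m Hd Hp. induction m.
  - exists (fun _ => z). simpl. repeat split; auto. intros; lia.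
  - simpl. apply chain_app with z; auto. apply chain_orbit; auto.
Qed.

Hypothesis Htr : transitive X f.

Lemma chain_trans : forall del, 0 < del -> forall a b, exists L, (1 <= L)%nat /\ chain del a b L.
Proof.
  intros del Hd a b.
  destruct (fcont a (del / 2) ltac:(lra)) as [e1 [He1 Hc1]].
  destruct (fcont (g b) (del / 2) ltac:(lra)) as [e2 [He2 Hc2]].
  rewrite fg in Hc2.
  destruct (Htr (Defs.ball X a e1) (Defs.ball X (g b) e2) (ball_open a e1) (ball_open (g b) e2)) as [k [u [Hu Hv]]].
  - exists a. unfold Defs.ball. rewrite d_refl. auto.
  - exists (g b). unfold Defs.ball. rewrite d_refl. auto.
  - unfold Defs.ball in Hu, Hv.
    exists (S k). split; [lia|].
    exists (fun i => if Nat.eqb i 0 then a else if Nat.leb i k then Nat.iter i f u else b).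
    split; [reflexivity|split].
    + cbn [Nat.eqb]. destruct (Nat.leb_spec (S k) k); [lia|reflexivity].
    + intros i Hi. destruct (Nat.eqb_spec i 0).
      * subst. cbn [Nat.eqb]. specialize (Hc1 u Hu). destruct (Nat.leb_spec 1 k).
        -- simpl. lra.
        -- assert (k = 0%nat) by lia. subst. simpl in Hv. specialize (Hc2 u Hv).
           pose proof (d_tri (f a) (f u) b). rewrite (d_sym (f u) b) in H0. lra.
      * cbn [Nat.eqb]. destruct (Nat.eqb_spec i 0); [lia|].
        destruct (Nat.leb_spec i k); [|lia]. destruct (Nat.leb_spec (S i) k).
        -- simpl. rewrite d_refl. lra.
        -- assert (i = k) by lia. subst. specialize (Hc2 _ Hv). rewrite d_sym. lra.
Qed.

Lemma mod_step : forall k L : Z, (0 < L)%Z ->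
  ((k + 1) mod L = if Z.ltb (k mod L + 1) L then k mod L + 1 else 0)%Z.
Proof.
  intros k L HL. rewrite <- Z.add_mod_idemp_l by lia.
  pose proof (Z.mod_pos_bound k L HL).
  destruct (Z.ltb_spec (k mod L + 1) L).
  - apply Z.mod_small. lia.
  - replace (k mod L + 1)%Z with L by lia. apply Z.mod_same. lia.
Qed.

Lemma periodic : forall x0 : X, exists z p, (1 <= p)%nat /\ Nat.iter p f z = z.
Proof.
  intro x0. destruct (Hsh (c / 4) ltac:(lra)) as [del [Hdel Hsd]].
  destruct (chain_trans del Hdel x0 x0) as [L [HL [C [HC0 [HCL HCs]]]]].
  set (LZ := Z.of_nat L).
  assert (HLZ : (0 < LZ)%Z) by (unfold LZ; lia).
  pose (P := fun k => C (Z.to_nat (k mod LZ))).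
  destruct (Hsd P) as [z Hz].
  { intro k. unfold P. rewrite mod_step by auto.
    pose proof (Z.mod_pos_bound k LZ HLZ).
    destruct (Z.ltb_spec (k mod LZ + 1) LZ).
    + rewrite Z2Nat.inj_add by lia. simpl. rewrite Nat.add_1_r. apply HCs. unfold LZ in *. lia.
    + simpl. rewrite HC0. rewrite <- HCL.
      assert (EL : L = S (Z.to_nat (k mod LZ))) by (unfold LZ in *; lia).
      rewrite EL at 1. apply HCs. unfold LZ in *. lia. }
  pose (w := fun j : nat => zi (Z.of_nat j * LZ) z).
  assert (Hw : forall j, inW z (w j)).
  { intros j k. unfold w. rewrite <- zi_add.
    assert (HP : P (k + Z.of_nat j * LZ)%Z = P k).
    { unfold P. rewrite Z_mod_plus_full. reflexivity. }
    pose proof (Hz (k + Z.of_nat j * LZ)%Z). rewrite HP in H. pose proof (Hz k).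
    pose proof (d_tri (zi (k + Z.of_nat j * LZ) z) (P k) (zi k z)).
    rewrite (d_sym (P k)) in H1. lra. }
  destruct (classic (exists m l, (m < l)%nat /\ w m = w l)) as [[m [l [Hml Heq]]]|Hno].
  - exists z, ((l - m) * L)%nat. split; [nia|].
    rewrite <- zi_nat. unfold w in Heq.
    assert (E : zi (- (Z.of_nat m * LZ)) (zi (Z.of_nat m * LZ) z) = zi (- (Z.of_nat m * LZ)) (zi (Z.of_nat l * LZ) z)).
    { rewrite Heq. reflexivity. }
    rewrite <- !zi_add in E. replace (- (Z.of_nat m * LZ) + Z.of_nat m * LZ)%Z with 0%Z in E by lia.
    rewrite zi_0 in E.
    replace (Z.of_nat ((l - m) * L)) with (- (Z.of_nat m * LZ) + Z.of_nat l * LZ)%Z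
      by (unfold LZ; rewrite Nat2Z.inj_mul, Nat2Z.inj_sub by lia; lia).
    symmetry. exact E.
  - exfalso. apply (too_many z w).
    + intros; apply Hw.
    + intros m l _ _ Hml Heq. apply Hno. assert (Hc : (m < l \/ l < m)%nat) by lia.
      destruct Hc; [exists m, l | exists l, m]; auto.
Qed.

Lemma unif_to : forall z del, 0 < del -> exists T, forall a, exists l, (l <= T)%nat /\ chain del a z l.
Proof.
  intros z del Hd.
  destruct (Hcpt nat (fun l a => (1 <= l)%nat /\ chain del a z l)) as [ls Hls].
  - intros l a [Hl [C [HC0 [HCl HCs]]]].
    assert (Hs0 := HCs 0%nat ltac:(lia)). rewrite HC0 in Hs0.
    destruct (fcont a (del - d (f a) (C 1%nat)) ltac:(lra)) as [r [Hr Hcr]].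
    exists r. split; auto. intros a' Ha'. split; auto.
    exists (fun i => if Nat.eqb i 0 then a' else C i). split; [reflexivity|split].
    + destruct (Nat.eqb_spec l 0); [lia|]. auto.
    + intros i Hi. destruct (Nat.eqb_spec i 0).
      * subst i. simpl. specialize (Hcr a' Ha'). pose proof (d_tri (f a') (f a) (C 1%nat)).
        rewrite (d_sym (f a') (f a)) in H. lra.
      * cbn [Nat.eqb]. destruct (Nat.eqb_spec (S i) 0); [lia|].
        destruct i; [lia|]. apply HCs. auto.
  - intro a. destruct (chain_trans del Hd a z) as [L [HL HC]]. exists L. auto.
  - exists (fold_right Nat.max 0%nat ls). intro a. destruct (Hls a) as [l [Hin [_ Hc]]].
    exists l. split; auto. apply fold_max_ge. auto.
Qed.

Lemma unif_from : forall z del, 0 < del -> exists T, forall b, exists l, (l <= T)%nat /\ chain del z b l.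
Proof.
  intros z del Hd.
  destruct (Hcpt nat (fun l b => (1 <= l)%nat /\ chain del z b l)) as [ls Hls].
  - intros l b [Hl [C [HC0 [HCl HCs]]]].
    assert (Hs0 := HCs (l - 1)%nat ltac:(lia)). replace (S (l - 1)) with l in Hs0 by lia.
    rewrite HCl in Hs0.
    exists (del - d (f (C (l - 1)%nat)) b). split; [lra|]. intros b' Hb'. unfold Defs.ball in Hb'. split; auto.
    exists (fun i => if Nat.eqb i l then b' else C i). split; [|split].
    + destruct (Nat.eqb_spec 0 l); [lia|]. auto.
    + rewrite Nat.eqb_refl. reflexivity.
    + intros i Hi. destruct (Nat.eqb_spec i l); [lia|]. destruct (Nat.eqb_spec (S i) l).
      * assert (i = (l - 1)%nat) by lia. subst i. pose proof (d_tri (f (C (l - 1)%nat)) b b'). lra.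
      * apply HCs. auto.
  - intro b. destruct (chain_trans del Hd z b) as [L [HL HC]]. exists L. auto.
  - exists (fold_right Nat.max 0%nat ls). intro b. destruct (Hls b) as [l [Hin [_ Hc]]].
    exists l. split; auto. apply fold_max_ge. auto.
Qed.

Lemma dist_lt_of_abs : forall x y e, Rabs (d x y) < e -> d x y < e.
Proof. intros x y e H. pose proof (RRle_abs (d x y)). lra. Qed.

Lemma step_j : forall z p, (1 <= p)%nat -> Nat.iter p f z = z ->
  forall xs, two_sided_limit_pseudo_orbit X f xs -> forall eps, 0 < eps ->
  exists y (K : nat) (M : Z), (1 <= K <= p)%nat /\
    (forall k, (k <= - M)%Z -> d (zi k y) (xs k) < eps) /\
    (forall k, (M <= k)%Z -> d (zi (Z.of_nat K + k) y) (xs k) < eps).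
Proof.
  intros z p Hp Hz xs [Hpos Hneg] eps He.
  destruct (Hsh eps He) as [del [Hdel Hsd]].
  destruct (unif_to z del Hdel) as [T1 HT1].
  destruct (unif_from z del Hdel) as [T2 HT2].
  destruct (Hpos del Hdel) as [Kp HKp].
  destruct (Hneg del Hdel) as [Kn HKn].
  set (M := (T1 + T2 + Z.to_nat (Z.abs Kp) + Z.to_nat (Z.abs Kn) + 1)%nat).
  set (MZ := Z.of_nat M).
  destruct (HT1 (xs (- MZ)%Z)) as [l1 [Hl1 C1]].
  destruct (HT2 (xs MZ)) as [l2 [Hl2 C2]].
  set (D := (2 * M - l1 - l2)%nat).
  set (q := (D / p + 1)%nat).
  set (K := (q * p - D)%nat).
  assert (HDp := Nat.div_mod_eq D p). assert (HDm := Nat.mod_upper_bound D p ltac:(lia)).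
  assert (HK : (1 <= K <= p)%nat /\ (q * p = D + K)%nat).
  { unfold K, q. nia. }
  assert (HL : (l1 + q * p + l2 = 2 * M + K)%nat).
  { unfold D in HK. unfold M in *. lia. }
  assert (Hch : chain del (xs (- MZ)%Z) (xs MZ) (2 * M + K)).
  { rewrite <- HL. apply chain_app with z; auto. apply chain_app with z; auto.
    apply chain_rep; auto. }
  destruct Hch as [C [HC0 [HCL HCs]]].
  set (KZ := Z.of_nat K).
  pose (sq := fun k => if Z.leb k (- MZ) then xs k else if Z.leb k (MZ + KZ) then C (Z.to_nat (k + MZ)) else xs (k - KZ)%Z).
  assert (HMZ : (MZ >= 1 /\ MZ >= Kp /\ - MZ - 1 < Kn)%Z) by (unfold MZ, M; lia).
  destruct (Hsd sq) as [y Hy].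
  { intro k. unfold sq.
    destruct (Z.leb_spec k (- MZ)); destruct (Z.leb_spec (k + 1) (- MZ)).
    - apply dist_lt_of_abs. apply HKn. lia.
    - assert (k = - MZ)%Z by lia. subst k.
      destruct (Z.leb_spec (- MZ + 1) (MZ + KZ)); [|lia].
      rewrite <- HC0. replace (Z.to_nat (- MZ + 1 + MZ)) with 1%nat by lia.
      apply HCs. lia.
    - lia.
    - destruct (Z.leb_spec k (MZ + KZ)); destruct (Z.leb_spec (k + 1) (MZ + KZ)).
      + replace (Z.to_nat (k + 1 + MZ)) with (S (Z.to_nat (k + MZ))) by lia.
        apply HCs. unfold KZ, MZ in *. lia.
      + assert (k = MZ + KZ)%Z by lia. subst k.
        replace (Z.to_nat (MZ + KZ + MZ)) with (2 * M + K)%nat by (unfold MZ, KZ; lia).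
        rewrite HCL. replace (MZ + KZ + 1 - KZ)%Z with (MZ + 1)%Z by lia.
        apply dist_lt_of_abs. apply HKp. lia.
      + lia.
      + replace (k + 1 - KZ)%Z with ((k - KZ) + 1)%Z by lia.
        apply dist_lt_of_abs. apply HKp. lia. }
  exists y, K, MZ. split; [apply HK|split].
  - intros k Hk. specialize (Hy k). unfold sq in Hy.
    destruct (Z.leb_spec k (- MZ)); [auto|lia].
  - intros k Hk. specialize (Hy (KZ + k)%Z). unfold sq in Hy. fold KZ.
    destruct (Z.leb_spec (KZ + k) (- MZ)); [unfold KZ in *; lia|].
    destruct (Z.leb_spec (KZ + k) (MZ + KZ)).
    + assert (k = MZ) by lia. subst k.
      replace (Z.to_nat (KZ + MZ + MZ)) with (2 * M + K)%nat in Hy by (unfold MZ, KZ; lia).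
      rewrite HCL in Hy. auto.
    + replace (KZ + k - KZ)%Z with k in Hy by lia. auto.
Qed.

Lemma pigeon_aux : forall (h : nat -> nat) N,
  (forall v, (v <= N)%nat -> exists B, forall j, (B <= j)%nat -> h j <> v) ->
  exists B, forall j, (B <= j)%nat -> forall v, (v <= N)%nat -> h j <> v.
Proof.
  intros h N. induction N; intros H.
  - destruct (H 0%nat ltac:(lia)) as [B HB]. exists B. intros j Hj v Hv.
    assert (v = 0%nat) by lia. subst. auto.
  - destruct IHN as [B1 HB1]. { intros v Hv. apply H. lia. }
    destruct (H (S N) ltac:(lia)) as [B2 HB2]. exists (B1 + B2)%nat. intros j Hj v Hv.
    destruct (Nat.eq_dec v (S N)).
    + subst. apply HB2. lia.
    + apply HB1; lia.
Qed.

Lemma pigeon : forall (h : nat -> nat) N, (forall j, (h j <= N)%nat) ->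
  exists v, forall B, exists j, (B <= j)%nat /\ h j = v.
Proof.
  intros h N Hh. apply NNPP. intro Hn.
  assert (H : forall v, (v <= N)%nat -> exists B, forall j, (B <= j)%nat -> h j <> v).
  { intros v _. apply NNPP. intro H1. apply Hn. exists v. intro B. apply NNPP. intro H2.
    apply H1. exists B. intros j Hj Heq. apply H2. exists j. auto. }
  destruct (pigeon_aux h N H) as [B HB]. apply (HB B (le_n B) (h B)); auto.
Qed.

Lemma choice_gen : forall (A : Type) (P : nat -> A -> Prop), (forall m, exists a, P m a) ->
  exists h : nat -> A, forall m, P m (h m).
Proof.
  intros A P H. exists (fun m => proj1_sig (constructive_indefinite_description _ (H m))).
  intro m. exact (proj2_sig (constructive_indefinite_description _ (H m))).
Qed.

Lemma main_sec : two_sided_limit_shadowing_gap X f g.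
Proof.
  destruct (classic (inhabited X)) as [[x0]|Hni].
  2: { exists 0%nat. intros xs _. exfalso. apply Hni. exact (inhabits (xs 0%Z)). }
  destruct (periodic x0) as [z [p [Hp Hz]]].
  exists p. intros xs Hxs.
  pose (eps := fun j : nat => c / 4 * / (INR j + 1)).
  assert (Heps : forall j, 0 < eps j /\ eps j <= c / 4).
  { intro j. unfold eps. pose proof (pos_INR j).
    assert (0 < / (INR j + 1)) by (apply Rinv_0_lt_compat; lra).
    assert (/ (INR j + 1) <= 1).
    { rewrite <- Rinv_1. apply Rinv_le_contravar; lra. }
    split; nra. }
  assert (Hepsl : forall gam, 0 < gam -> exists N, forall j, (N <= j)%nat -> eps j < gam).
  { intros gam Hg. destruct (archi_inv (4 * gam / c)) as [N HN].
    { apply Rdiv_lt_0_compat; lra. }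
    exists N. intros j Hj. unfold eps.
    assert (/ (INR j + 1) <= / (INR N + 1)).
    { apply Rinv_le_contravar. pose proof (pos_INR N). lra. apply le_INR in Hj. lra. }
    assert (c / 4 * / (INR j + 1) < c / 4 * (4 * gam / c)).
    { apply Rmult_lt_compat_l; lra. }
    replace (c / 4 * (4 * gam / c)) with gam in H0 by (field; lra). lra. }
  destruct (choice_gen (X * nat * Z) (fun j t => (1 <= snd (fst t) <= p)%nat /\
    (forall k, (k <= - snd t)%Z -> d (zi k (fst (fst t))) (xs k) < eps j) /\
    (forall k, (snd t <= k)%Z -> d (zi (Z.of_nat (snd (fst t)) + k) (fst (fst t))) (xs k) < eps j)))
    as [hh Hhh].
  { intro j. destruct (step_j z p Hp Hz xs Hxs (eps j) (proj1 (Heps j))) as [y [K [M HH]]].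
    exists (y, K, M). exact HH. }
  pose (Y := fun j => fst (fst (hh j))). pose (Kf := fun j => snd (fst (hh j))).
  pose (Mf := fun j => snd (hh j)).
  assert (HK : forall j, (1 <= Kf j <= p)%nat) by (intro j; apply Hhh).
  assert (Hneg : forall j k, (k <= - Mf j)%Z -> d (zi k (Y j)) (xs k) < eps j) by (intro j; apply Hhh).
  assert (Hpos : forall j k, (Mf j <= k)%Z -> d (zi (Z.of_nat (Kf j) + k) (Y j)) (xs k) < eps j)
    by (intro j; apply Hhh).
  clearbody Y Kf Mf.
  destruct (pigeon Kf p) as [K0 HK0]. { intro j. apply HK. }
  pose (J := fun j => Kf j = K0).
  assert (HclF : forall i j, J i -> J j -> closeS 1 (Y i) (Y j) (c / 2)).
  { intros i j Hi Hj. exists (Z.of_nat K0 + Z.max (Mf i) (Mf j))%Z. intros k Hk.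
    pose proof (Hpos i (k - Z.of_nat K0)%Z ltac:(lia)) as A1.
    pose proof (Hpos j (k - Z.of_nat K0)%Z ltac:(lia)) as A2.
    unfold J in Hi, Hj. rewrite Hi in A1. rewrite Hj in A2.
    replace (Z.of_nat K0 + (k - Z.of_nat K0))%Z with k in A1, A2 by lia.
    pose proof (d_tri (zi k (Y i)) (xs (k - Z.of_nat K0)%Z) (zi k (Y j))).
    rewrite (d_sym (xs _) (zi k (Y j))) in H. pose proof (Heps i). pose proof (Heps j). lra. }
  assert (HclB : forall i j, closeS (-1) (Y i) (Y j) (c / 2)).
  { intros i j. exists (Z.max (Mf i) (Mf j)). intros k Hk.
    pose proof (Hneg i k ltac:(lia)) as A1. pose proof (Hneg j k ltac:(lia)) as A2.
    pose proof (d_tri (zi k (Y i)) (xs k) (zi k (Y j))).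
    rewrite (d_sym (xs k) (zi k (Y j))) in H. pose proof (Heps i). pose proof (Heps j). lra. }
  destruct (classes 1 Y J ltac:(lia) HK0 HclF) as [i0 [Hi0 Hc0]].
  pose (J' := fun j => J j /\ asym 1 (Y i0) (Y j)).
  destruct (classes (-1) Y J' ltac:(lia)) as [i1 [[Hi1 Ha1] Hc1]].
  { intro B. destruct (Hc0 B) as [j [Hj [HJ Ha]]]. exists j. split; auto. split; auto. }
  { intros i j _ _. apply HclB. }
  exists (Z.of_nat K0). split.
  { destruct (HK0 0%nat) as [j [_ Hj]]. pose proof (HK j). lia. }
  exists (Y i1). split.
  - intros gam Hg. destruct (Hepsl (gam / 2) ltac:(lra)) as [N HN].
    destruct (Hc1 N) as [j [Hj [_ Ha]]].
    destruct (Ha (gam / 2) ltac:(lra)) as [B HB].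
    exists (Z.min (- B) (- Mf j)). intros k Hk.
    rewrite Rabs_pos_eq by apply d_pos.
    specialize (HB k ltac:(lia)). specialize (Hneg j k ltac:(lia)). specialize (HN j Hj).
    pose proof (d_tri (zi k (Y i1)) (zi k (Y j)) (xs k)). lra.
  - intros gam Hg. destruct (Hepsl (gam / 2) ltac:(lra)) as [N HN].
    destruct (Hc0 N) as [j [Hj [HJj Ha]]].
    assert (Ha2 : asym 1 (Y i1) (Y j)) by (apply asym_trans with (Y i0); auto; apply asym_sym; auto).
    destruct (Ha2 (gam / 2) ltac:(lra)) as [B HB].
    exists (Z.max (Mf j) (B - Z.of_nat K0)). intros k Hk.
    rewrite Rabs_pos_eq by apply d_pos.
    specialize (HB (Z.of_nat K0 + k)%Z ltac:(lia)). specialize (Hpos j k ltac:(lia)).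
    unfold J in HJj. rewrite HJj in Hpos. specialize (HN j Hj).
    pose proof (d_tri (zi (Z.of_nat K0 + k) (Y i1)) (zi (Z.of_nat K0 + k) (Y j)) (xs k)). lra.
Qed.

End Main.

Theorem theorem2p2 (X : metric_space) (f g : X -> X) (n : nat) :
  compact_space X ->
  homeomorphism X f ->
  (forall x, g (f x) = x) -> (forall x, f (g x) = x) ->
  transitive X f ->
  n_expansive X n f g ->
  shadowing X f g ->
  two_sided_limit_shadowing_gap X f g.
Proof.
  intros Hc [Hfc [g' [Hg'c [Hg'1 Hg'2]]]] gf fg Htr [c [cpos Hexp]] Hsh.
  assert (Hgg : forall x, g x = g' x).
  { intro x. rewrite <- (Hg'1 (g x)). rewrite fg. reflexivity. }
  assert (Hgc : cont X g).
  { intros x e He. destruct (Hg'c x e He) as [dl [Hdl H]]. exists dl. split; auto.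
    intros y Hy. rewrite !Hgg. auto. }
  eapply main_sec; eauto.
Qed.
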